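(* Let $0\le\gamma_1<\dots<\gamma_p\le1$ and for each $i$ let $(\gamma_{i,n})_n$ be $[0,1]$-valued with $|\gamma_{i,n}-\gamma_i|=O(1/n)$. Then for every $i\in\{1,\dots,p\}$ there exist $\delta_i>0$ and $N\in\mathbb{N}$ such that $\phi_{n,\gamma_{i,n}}'(u)\ge\phi_{n,\gamma_{j,n}}'(u)$ for all $u\in(\gamma_i-\delta_i,\gamma_i+\delta_i)\cap[0,1]$, all $j\in\{1,\dots,p\}$ and all $n\ge N$.
   Context: $[x]$ is the integer part. $\phi_{n,\alpha}(t)=\sum_{j=1+[(n-1)\alpha]}^n\binom{n}{j}t^j(1-t)^{n-j}$, so $\phi_{n,\alpha}'(t)=n\binom{n-1}{[(n-1)\alpha]}t^{[(n-1)\alpha]}(1-t)^{n-[(n-1)\alpha]-1}$. *)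

(* Defs.v *)
From mathcomp Require Import all_boot all_order all_algebra.
From mathcomp Require Import reals.
Set Implicit Arguments. Unset Strict Implicit. Unset Printing Implicit Defensive.
Import Order.TTheory GRing.Theory Num.Theory.
Local Open Scope ring_scope.

(* k_{n,alpha} = [(n-1) alpha], the integer part (alpha in [0,1], so the
   argument is nonnegative and Num.truncn is the floor). *)
Definition kidx {R : realType} (n : nat) (alpha : R) : nat :=
  Num.truncn ((n.-1)%:R * alpha).

Definition phi {R : realType} (n : nat) (alpha t : R) : R :=
  \sum_((kidx n alpha).+1 <= j < n.+1) ('C(n, j))%:R * t ^+ j * (1 - t) ^+ (n - j).

(* phi'_{n,alpha}(t) = n C(n-1,k) t^k (1-t)^(n-k-1), k = [(n-1)alpha],
   as given explicitly in the paper. *)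
Definition phid {R : realType} (n : nat) (alpha t : R) : R :=
  let k := kidx n alpha in
  n%:R * ('C(n.-1, k))%:R * t ^+ k * (1 - t) ^+ (n - k - 1).

(* Main.v *)
Require Import Defs.
From mathcomp Require Import all_boot all_order all_algebra.
From mathcomp Require Import reals.
From mathcomp Require Import zify ring lra.
Import Order.TTheory GRing.Theory Num.Theory.
Local Open Scope ring_scope.


Lemma bin_le2 (m b : nat) : ('C(m, b) <= 2 ^ m)%N.
Proof.
elim: m b => [|m IH] [|b] //=.
- by rewrite bin0 expn_gt0.
- rewrite binS expnS; have := IH b.+1; have := IH b; lia.
Qed.

Section S.
Variable R : realType.

Definition Fbin (m k : nat) (u : R) : R := ('C(m, k))%:R * u ^+ k * (1 - u) ^+ (m - k).
Local Notation F := Fbin.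

Lemma F_ge0 m k u : 0 <= u <= 1 -> 0 <= F m k u.
Proof.
case/andP=> h0 h1; rewrite /Fbin; apply: mulr_ge0; [apply: mulr_ge0|];
  [by [] | exact: exprn_ge0 | apply: exprn_ge0; lra].
Qed.

Lemma F_step m k u :
  F m k.+1 u * ((k.+1)%:R * (1 - u)) = F m k u * ((m - k)%:R * u).
Proof.
rewrite /Fbin; case: (ltnP k m) => hk.
- have e : (m - k = (m - k.+1).+1)%N by lia.
  have ex : (1 - u) ^+ (m - k) = (1 - u) * (1 - u) ^+ (m - k.+1) by rewrite e exprS.
  have hb : ((k.+1 * 'C(m, k.+1))%:R = ((m - k) * 'C(m, k))%:R :> R) by rewrite mul_bin_left.
  move: hb; rewrite !natrM => hb.
  rewrite ex exprS.
  transitivity (((k.+1)%:R * ('C(m, k.+1))%:R) * (u * u ^+ k * (1 - u) ^+ (m - k.+1) * (1 - u))); first ring.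
  rewrite hb; ring.
- rewrite bin_small; last lia.
  have -> : (m - k = 0)%N by lia.
  by rewrite !mul0r mulr0.
Qed.


Definition Rr (m c : nat) (u : R) : R := (m - c)%:R * u / ((c.+1)%:R * (1 - u)).

Lemma Rr_ge0 m c u : 0 <= u < 1 -> 0 <= Rr m c u.
Proof.
case/andP=> h0 h1; rewrite /Rr; apply: divr_ge0; first exact: mulr_ge0.
apply: mulr_ge0 => //; lra.
Qed.

Lemma nat_cross m c k : (c <= k)%N -> ((m - k) * c.+1 <= (m - c) * k.+1)%N.
Proof. move=> h; nia. Qed.

Lemma F_one m c k u : 0 <= u < 1 -> (c <= k)%N -> F m k.+1 u <= Rr m c u * F m k u.
Proof.
move=> hu hck; have /andP[h0 h1] := hu.
have hY : 0 < (k.+1)%:R * (1 - u) by apply: mulr_gt0; [rewrite ltr0n|lra].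
have hYc : 0 < (c.+1)%:R * (1 - u) by apply: mulr_gt0; [rewrite ltr0n|lra].
rewrite -(ler_pM2r hY) F_step.
have hF : 0 <= F m k u by apply: F_ge0; lra.
have key : (m - k)%:R * u <= Rr m c u * ((k.+1)%:R * (1 - u)).
  rewrite /Rr mulrAC ler_pdivlMr //.
  have hn := @nat_cross m c k hck.
  have : (((m - k) * c.+1)%:R <= ((m - c) * k.+1)%:R :> R) by rewrite ler_nat.
  rewrite !natrM => hn'.
  have hu1 : 0 <= u * (1 - u) by apply: mulr_ge0; lra.
  have H := ler_wpM2r hu1 hn'.
  have E1 : (m - k)%:R * c.+1%:R * (u * (1 - u)) = (m - k)%:R * u * (c.+1%:R * (1 - u)) by ring.
  have E2 : (m - c)%:R * k.+1%:R * (u * (1 - u)) = (m - c)%:R * u * (k.+1%:R * (1 - u)) by ring.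
  by rewrite -E1 -E2.
have H := ler_wpM2l hF key.
suff -> : Rr m c u * F m k u * (k.+1%:R * (1 - u)) = F m k u * (Rr m c u * (k.+1%:R * (1 - u))) by [].
ring.
Qed.

Lemma F_iter m c t u : 0 <= u < 1 -> F m (c + t) u <= Rr m c u ^+ t * F m c u.
Proof.
move=> hu; elim: t => [|t IH]; first by rewrite addn0 expr0 mul1r.
rewrite addnS exprS -mulrA.
apply: (le_trans (@F_one m c (c + t) u hu (leq_addr t c))).
apply: ler_wpM2l; [exact: Rr_ge0|exact: IH].
Qed.


Lemma Rr_dec m a c u : 0 <= u < 1 -> (a <= c)%N -> Rr m c u <= Rr m a u.
Proof.
case/andP=> h0 h1 hac.
have hYa : 0 < (a.+1)%:R * (1 - u) by apply: mulr_gt0; [rewrite ltr0n|lra].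
have hYc : 0 < (c.+1)%:R * (1 - u) by apply: mulr_gt0; [rewrite ltr0n|lra].
rewrite /Rr ler_pdivrMr // mulrAC ler_pdivlMr //.
have hn := @nat_cross m a c hac.
have : (((m - c) * a.+1)%:R <= ((m - a) * c.+1)%:R :> R) by rewrite ler_nat.
rewrite !natrM => hn'.
have hu1 : 0 <= u * (1 - u) by apply: mulr_ge0; lra.
have H := ler_wpM2r hu1 hn'.
have E1 : (m - c)%:R * a.+1%:R * (u * (1 - u)) = (m - c)%:R * u * (a.+1%:R * (1 - u)) by ring.
have E2 : (m - a)%:R * c.+1%:R * (u * (1 - u)) = (m - a)%:R * u * (c.+1%:R * (1 - u)) by ring.
by rewrite -E1 -E2.
Qed.

Lemma Rr_prod m a c u : 0 <= u < 1 ->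
  (m - a)%:R * u * ((m - c)%:R * u) <= (a.+1)%:R * (1 - u) * ((c.+1)%:R * (1 - u)) ->
  Rr m a u * Rr m c u <= 1.
Proof.
case/andP=> h0 h1 H.
have hYa : 0 < (a.+1)%:R * (1 - u) by apply: mulr_gt0; [rewrite ltr0n|lra].
have hYc : 0 < (c.+1)%:R * (1 - u) by apply: mulr_gt0; [rewrite ltr0n|lra].
rewrite /Rr mulf_div ler_pdivrMr ?mul1r //; exact: mulr_gt0.
Qed.

Lemma ratio_bound m a b c u : 0 <= u < 1 -> (a <= c)%N -> (c <= b)%N ->
  (c - a <= b - c)%N -> Rr m a u * Rr m c u <= 1 -> F m b u <= F m a u.
Proof.
move=> hu hac hcb hd hp.
have ha0 := Rr_ge0 m a u hu; have hc0 := Rr_ge0 m c u hu.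
have hca := Rr_dec m a c u hu hac.
have hc1 : Rr m c u <= 1.
  have : Rr m c u * Rr m c u <= 1.
    apply: le_trans hp; apply: ler_wpM2r => //.
  nra.
have hFa : 0 <= F m a u by apply: F_ge0; case/andP: hu => ? ?; lra.
have e1 : b = (c + (b - c))%N by lia.
have e2 : c = (a + (c - a))%N by lia.
have H1 := F_iter m c (b - c) u hu; rewrite -e1 in H1.
have H2 := F_iter m a (c - a) u hu; rewrite -e2 in H2.
have ef : (b - c = (b - c - (c - a)) + (c - a))%N by lia.
have hpow : Rr m c u ^+ (b - c) * Rr m a u ^+ (c - a) <= 1.
  rewrite ef exprD -mulrA -exprMn.
  apply: mulr_ile1; [exact: exprn_ge0|apply: exprn_ge0; exact: mulr_ge0|exact: exprn_ile1|].
  apply: exprn_ile1 => //; [exact: mulr_ge0|by rewrite mulrC].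
apply: le_trans H1 _.
apply: le_trans (ler_wpM2l (exprn_ge0 _ hc0) H2) _.
rewrite mulrA; apply: le_trans (ler_wpM2r hFa hpow) _.
by rewrite mul1r.
Qed.

Lemma poly_core (al mu u0 K D xm : R) :
 0 < al -> al < mu -> mu <= 1 -> 0 <= u0 -> u0 < 1 -> 0 <= K ->
 D = al * mu * (1 - u0)^+2 - (1 - al) * (1 - mu) * u0^+2 ->
 1 <= xm -> 4 * K + K^+2 <= xm * D ->
 (xm * (1 - al) + K) * (xm * (1 - mu) + K) * u0^+2
   <= (xm * al - K) * (xm * mu - K) * (1 - u0)^+2.
Proof.
move=> ha hm hm1 hu0 hu1 hK hD hxm hxD.
have E : (xm * (1 - al) + K) * (xm * (1 - mu) + K) * u0^+2
   - (xm * al - K) * (xm * mu - K) * (1 - u0)^+2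
   = - xm * (xm * D) + xm * K * ((2 - al - mu) * u0^+2 + (al + mu) * (1 - u0)^+2)
     + K^+2 * (u0^+2 - (1 - u0)^+2).
  rewrite hD; ring.
have B1 : (2 - al - mu) * u0^+2 + (al + mu) * (1 - u0)^+2 <= 4.
  have h1 : u0^+2 <= 1 by rewrite expr_le1 //; lra.
  have h2 : (1 - u0)^+2 <= 1 by rewrite expr_le1 //; lra.
  nra.
have B2 : u0^+2 - (1 - u0)^+2 <= 1 by rewrite expr2 expr2; nra.
have hxK : 0 <= xm * K by nra.
have B3 : xm * K * ((2 - al - mu) * u0^+2 + (al + mu) * (1 - u0)^+2) <= xm * K * 4
  by apply: ler_wpM2l.
have B4 : K^+2 * (u0^+2 - (1 - u0)^+2) <= K^+2 by rewrite -{2}(mulr1 (K^+2)); apply: ler_wpM2l => //; exact: sqr_ge0.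
have B5 : xm * (4 * K + K^+2) <= xm * (xm * D) by apply: ler_wpM2l => //; lra.
have B6 : K^+2 <= xm * K^+2 by rewrite -{1}(mul1r (K^+2)); apply: ler_wpM2r => //; exact: sqr_ge0.
rewrite -subr_le0 E; nra.
Qed.


Lemma poly_full (al mu u0 K D xm xa xc u : R) :
 0 < al -> al < mu -> mu <= 1 -> 0 <= u0 -> u0 < 1 -> 0 <= K ->
 D = al * mu * (1 - u0)^+2 - (1 - al) * (1 - mu) * u0^+2 ->
 1 <= xm -> 4 * K + K^+2 <= xm * D -> K <= xm * al ->
 0 <= u -> u <= u0 ->
 0 <= xm - xa -> xm - xa <= xm * (1 - al) + K ->
 0 <= xm - xc -> xm - xc <= xm * (1 - mu) + K ->
 xm * al - K <= xa + 1 -> xm * mu - K <= xc + 1 ->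
 (xm - xa) * u * ((xm - xc) * u) <= (xa + 1) * (1 - u) * ((xc + 1) * (1 - u)).
Proof.
move=> ha hm hm1 hu0 hu1 hK hD hxm hxD hKa hu hu' h1 h2 h3 h4 h5 h6.
have C := @poly_core al mu u0 K D xm ha hm hm1 hu0 hu1 hK hD hxm hxD.
have hP : 0 <= xm * al - K by lra.
have hQ : 0 <= xm * mu - K by nra.
have S1 : (xm - xa) * (xm - xc) <= (xm * (1 - al) + K) * (xm * (1 - mu) + K) by apply: ler_pM.
have S2 : u ^+ 2 <= u0 ^+ 2 by rewrite !expr2; apply: ler_pM.
have S3 : (xm * al - K) * (xm * mu - K) <= (xa + 1) * (xc + 1) by apply: ler_pM.
have S4 : (1 - u0) ^+ 2 <= (1 - u) ^+ 2 by rewrite !expr2; apply: ler_pM; lra.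
have L : (xm - xa) * (xm - xc) * u^+2 <= (xm * (1 - al) + K) * (xm * (1 - mu) + K) * u0^+2.
  apply: ler_pM => //; [exact: mulr_ge0|exact: sqr_ge0].
have Rg : (xm * al - K) * (xm * mu - K) * (1 - u0)^+2 <= (xa + 1) * (xc + 1) * (1 - u)^+2.
  apply: ler_pM => //; [exact: mulr_ge0|exact: sqr_ge0].
have E1 : (xm - xa) * u * ((xm - xc) * u) = (xm - xa) * (xm - xc) * u^+2 by rewrite expr2; ring.
have E2 : (xa + 1) * (1 - u) * ((xc + 1) * (1 - u)) = (xa + 1) * (xc + 1) * (1 - u)^+2 by rewrite expr2; ring.
rewrite E1 E2; exact: le_trans L (le_trans C Rg).
Qed.

Lemma exists_nat_ge (x : R) : exists M : nat, forall m : nat, (M <= m)%N -> x <= m%:R.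
Proof.
exists (Num.truncn x).+1 => m hm.
have h := @Num.Theory.truncnS_gt R x.
apply: le_trans (ltW h) _; by rewrite ler_nat.
Qed.


End S.


Section S.
Variable R : realType.
Local Notation F := (@Fbin R).
Lemma core_pos (al g K : R) : 0 < al -> 0 < g -> al + g <= 1 -> 0 <= K ->
  exists delta : R, 0 < delta /\ al + delta < 1 /\ exists M : nat,
  forall (m a b : nat) (be u : R), (M <= m)%N -> (a <= m)%N -> (b <= m)%N ->
  al + g <= be -> `|a%:R - m%:R * al| <= K -> `|b%:R - m%:R * be| <= K ->
  0 <= u -> u <= al + delta -> F m b u <= F m a u.
Proof.
move=> ha hg hag hK.
pose mu := al + g / 2; pose dl := al * (1 - al) * g / 20; pose u0 := al + dl.
pose D := al * mu * (1 - u0)^+2 - (1 - al) * (1 - mu) * u0^+2.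
pose K' := K + 1.
have h1a : 0 < 1 - al by lra.
have hdl : 0 < dl by rewrite /dl; apply: divr_gt0 => //; apply: mulr_gt0 => //; exact: mulr_gt0.
have hal1 : al * (1 - al) <= 1 by nra.
have hdlg : dl <= g / 20 by rewrite /dl ler_pM2r ?invr_gt0 //; nra.
have hu01 : u0 < 1 by rewrite /u0; lra.
have hD : 5 * dl <= D.
  have e10 : 10 * dl = al * (1 - al) * (mu - al) by rewrite /dl /mu; field.
  have hmu1 : mu <= 1 by rewrite /mu; lra.
  have hmu0 : 0 <= mu by rewrite /mu; lra.
  have ED : D = al * (1 - al) * (mu - al) + al * mu * (dl^+2 - 2 * dl * (1 - al))
        - (1 - al) * (1 - mu) * (2 * al * dl + dl^+2).
    by rewrite /D /u0; ring.
  rewrite ED -e10.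
  have hdl1 : dl <= 1 by lra.
  have q1 : 0 <= al * mu by nra.
  have q1' : al * mu <= 1 by nra.
  have q2 : 0 <= (1 - al) * (1 - mu) by nra.
  have q2' : (1 - al) * (1 - mu) <= 1 by nra.
  have t1 : - (2 * dl) <= dl^+2 - 2 * dl * (1 - al) by rewrite expr2; nra.
  have t1' : dl^+2 - 2 * dl * (1 - al) <= dl by rewrite expr2; nra.
  have t2 : 0 <= 2 * al * dl + dl^+2 by rewrite expr2; nra.
  have t2' : 2 * al * dl + dl^+2 <= 3 * dl by rewrite expr2; nra.
  nra.
have hDp : 0 < D by lra.
have [M1 hM1] := exists_nat_ge R 1.
have [M2 hM2] := exists_nat_ge R ((4 * K' + K'^+2) / D).
have [M3 hM3] := exists_nat_ge R (K' / al).
have [M4 hM4] := exists_nat_ge R ((2 * K + 1) / g).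
exists dl; split => //; split; first by rewrite -/u0.
exists (M1 + M2 + M3 + M4)%N => m a b be u hm ham hbm hbe hA hB hu hu'.
have x1 : 1 <= m%:R :> R by apply: hM1; clear -hm; lia.
have x2 : 4 * K' + K'^+2 <= m%:R * D by rewrite -ler_pdivrMr //; apply: hM2; clear -hm; lia.
have x3 : K' <= m%:R * al by rewrite -ler_pdivrMr //; apply: hM3; clear -hm; lia.
have x4 : 2 * K + 1 <= m%:R * g by rewrite -ler_pdivrMr //; apply: hM4; clear -hm; lia.
move: hA hB; rewrite !ler_norml => /andP[hA1 hA2] /andP[hB1 hB2].
have xb : m%:R * (al + g) <= m%:R * be by apply: ler_wpM2l => //; lra.
rewrite mulrDr in xb.
have hab : (a < b)%N by rewrite -(ltr_nat R); lra.
pose c := ((a + b) %/ 2)%N.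
have hc1 : (a <= c)%N by rewrite /c; clear -hab; lia.
have hc2 : (c <= b)%N by rewrite /c; clear -hab; lia.
have hc3 : (c - a <= b - c)%N by rewrite /c; clear -hab; lia.
have hc4 : (a + b <= c * 2 + 1)%N by rewrite /c; clear -hab; lia.
have xc := hc4; rewrite -(ler_nat R) !natrD natrM in xc.
have hcm : (c <= m)%N by apply: leq_trans hc2 hbm.
have xam : (a%:R <= m%:R :> R) by rewrite ler_nat.
have xcm : (c%:R <= m%:R :> R) by rewrite ler_nat.
have hu1 : 0 <= u < 1 by apply/andP; split; lra.
apply: (@ratio_bound R m a b c u) => //.
apply: Rr_prod => //.
rewrite !natrB // -!natr1.
have em1 : m%:R * (1 - mu) = m%:R - m%:R * al - m%:R * g / 2 by rewrite /mu; ring.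
have em2 : m%:R * mu = m%:R * al + m%:R * g / 2 by rewrite /mu; ring.
have em3 : m%:R * (1 - al) = m%:R - m%:R * al by ring.
have hmu : al < mu by rewrite /mu; lra.
have hmu1 : mu <= 1 by rewrite /mu; lra.
have hu00 : 0 <= u0 by rewrite /u0; lra.
apply: (@poly_full R al mu u0 K' D) => //; rewrite ?em1 ?em2 ?em3 /K'; lra.
Qed.
End S.


Section S.
Variable R : realType.
Local Notation F := (@Fbin R).

Lemma pow_key (m s d : nat) (u : R) : 0 <= u -> u <= (1/2) ^+ s.+1 -> (m <= s * d)%N ->
  2 ^+ m * u ^+ d <= (1 - u) ^+ d.
Proof.
move=> hu hus hm.
have hh0 : 0 <= (1/2 : R) by lra.
have hh1 : (1/2 : R) <= 1 by lra.
have hd1 : (1/2 : R) ^+ s.+1 <= 1/2.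
  have t : (1/2 : R) ^+ s <= 1 by exact: exprn_ile1.
  have t0 : 0 <= (1/2 : R) ^+ s by exact: exprn_ge0.
  rewrite exprS; nra.
have e1 : u ^+ d <= ((1/2) ^+ s.+1) ^+ d by apply: lerXn2r => //; rewrite nnegrE // exprn_ge0.
have e2 : ((1/2 : R) ^+ s.+1) ^+ d = (1/2) ^+ d * (1/2) ^+ (s * d) by rewrite exprS exprMn exprM.
have e3 : (1/2 : R) ^+ (s * d) <= (1/2) ^+ m by apply: ler_wiXn2l.
have e4 : (2 : R) ^+ m * (1/2) ^+ m = 1.
  by rewrite -exprMn (_ : (2 : R) * (1/2) = 1) ?expr1n //; lra.
have e5 : (1/2 : R) ^+ d <= (1 - u) ^+ d by apply: lerXn2r; rewrite ?nnegrE; lra.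
have h2 : 0 <= (2 : R) ^+ m by apply: exprn_ge0.
have h3 : 0 <= (1/2 : R) ^+ d by apply: exprn_ge0.
apply: le_trans (ler_wpM2l h2 e1) _; rewrite e2.
apply: le_trans (ler_wpM2l h2 (ler_wpM2l h3 e3)) _.
by rewrite mulrCA e4 mulr1.
Qed.


Lemma core_zero (g K : R) : 0 < g -> 0 <= K ->
  exists delta : R, 0 < delta /\ 0 + delta < 1 /\ exists M : nat,
  forall (m a b : nat) (be u : R), (M <= m)%N -> (a <= m)%N -> (b <= m)%N ->
  0 + g <= be -> `|a%:R - m%:R * 0| <= K -> `|b%:R - m%:R * be| <= K ->
  0 <= u -> u <= 0 + delta -> F m b u <= F m a u.
Proof.
move=> hg hK.
pose s := (Num.truncn (2 / g)).+1.
have hs : 2 <= s%:R * g.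
  have := @Num.Theory.truncnS_gt R (2 / g); rewrite -/s => h.
  by rewrite -ler_pdivrMr //; apply: ltW.
pose dl : R := (1/2) ^+ s.+1.
have hdl0 : 0 < dl by rewrite /dl exprn_gt0 //; lra.
have hdl1 : dl <= 1/2.
  have t : (1/2 : R) ^+ s <= 1 by apply: exprn_ile1; lra.
  have t0 : 0 <= (1/2 : R) ^+ s by apply: exprn_ge0; lra.
  rewrite /dl exprS; nra.
have [M hM] := exists_nat_ge R (4 * K / g).
exists dl; split => //; split; first lra.
exists M => m a b be u hm ham hbm hbe hA hB hu hu'.
have x1 : 4 * K <= m%:R * g by rewrite -ler_pdivrMr //; apply: hM.
rewrite mulr0 subr0 ger0_norm ?ler0n // in hA.
move: hB; rewrite ler_norml => /andP[hB1 hB2].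
have xb : m%:R * g <= m%:R * be by apply: ler_wpM2l => //; lra.
have hab : (a <= b)%N by rewrite -(ler_nat R); lra.
pose d := (b - a)%N.
have xd : d%:R = b%:R - a%:R :> R by rewrite /d natrB.
have hsd : (m <= s * d)%N.
  rewrite -(ler_nat R) natrM xd.
  have h1 : m%:R * g / 2 <= b%:R - a%:R :> R by lra.
  have h2 : s%:R * (m%:R * g / 2) <= s%:R * (b%:R - a%:R) :> R by apply: ler_wpM2l.
  have h3 : m%:R * 2 <= m%:R * (s%:R * g) :> R by apply: ler_wpM2l.
  have e : s%:R * (m%:R * g / 2) = m%:R * (s%:R * g) / 2 :> R by ring.
  lra.
rewrite add0r in hu'.
have hpk := @pow_key m s d u hu hu' hsd.
rewrite /Fbin.
have eb : b = (a + d)%N by rewrite /d subnKC.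
have ema : (m - a = (m - b) + d)%N by rewrite /d; clear -hab hbm; lia.
rewrite ema {2}eb !exprD.
have hC : ('C(m, b))%:R <= (2 : R) ^+ m.
  by rewrite -natrX ler_nat bin_le2.
have hCa : 1 <= ('C(m, a))%:R :> R by rewrite ler1n bin_gt0.
have hua : 0 <= u ^+ a by exact: exprn_ge0.
have hud : 0 <= u ^+ d by exact: exprn_ge0.
have hY : 0 <= (1 - u) ^+ (m - b) by apply: exprn_ge0; lra.
have hZ : 0 <= (1 - u) ^+ d by apply: exprn_ge0; lra.
set P := u ^+ a * (1 - u) ^+ (m - b).
have hP : 0 <= P by exact: mulr_ge0.
have L1 : ('C(m, b))%:R * (u ^+ a * u ^+ d) * (1 - u) ^+ (m - b) <= P * (2 ^+ m * u ^+ d).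
  have -> : ('C(m, b))%:R * (u ^+ a * u ^+ d) * (1 - u) ^+ (m - b) = ('C(m, b))%:R * (P * u ^+ d) by rewrite /P; ring.
  have -> : P * (2 ^+ m * u ^+ d) = 2 ^+ m * (P * u ^+ d) by ring.
  apply: ler_wpM2r => //; exact: mulr_ge0.
have L2 : P * (1 - u) ^+ d <= ('C(m, a))%:R * u ^+ a * ((1 - u) ^+ (m - b) * (1 - u) ^+ d).
  have -> : ('C(m, a))%:R * u ^+ a * ((1 - u) ^+ (m - b) * (1 - u) ^+ d) = ('C(m, a))%:R * (P * (1 - u) ^+ d) by rewrite /P; ring.
  rewrite -{1}(mul1r (P * _)); apply: ler_wpM2r => //; exact: mulr_ge0.
apply: le_trans L1 (le_trans _ L2).
exact: ler_wpM2l.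
Qed.

End S.


Section S.
Variable R : realType.
Local Notation F := (@Fbin R).

Lemma core (al g K : R) : 0 <= al -> 0 < g -> al + g <= 1 -> 0 <= K ->
  exists delta : R, 0 < delta /\ al + delta < 1 /\ exists M : nat,
  forall (m a b : nat) (be u : R), (M <= m)%N -> (a <= m)%N -> (b <= m)%N ->
  al + g <= be -> `|a%:R - m%:R * al| <= K -> `|b%:R - m%:R * be| <= K ->
  0 <= u -> u <= al + delta -> F m b u <= F m a u.
Proof.
move=> ha hg hag hK; case: (ltrgt0P al) => [hp|hn|->].
- exact: core_pos.
- lra.
- exact: core_zero.
Qed.

Lemma F_sym m k u : (k <= m)%N -> F m k u = F m (m - k) (1 - u).
Proof.
move=> hk; rewrite /Fbin bin_sub // subKn // (_ : 1 - (1 - u) = u); last ring.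
ring.
Qed.

Lemma core_low (al g K : R) : al <= 1 -> 0 < g -> g <= al -> 0 <= K ->
  exists delta : R, 0 < delta /\ exists M : nat,
  forall (m a b : nat) (be u : R), (M <= m)%N -> (a <= m)%N -> (b <= m)%N ->
  be + g <= al -> `|a%:R - m%:R * al| <= K -> `|b%:R - m%:R * be| <= K ->
  al - delta <= u -> u <= 1 -> F m b u <= F m a u.
Proof.
move=> ha hg hag hK.
have [dl [hdl [_ [M hM]]]] := @core (1 - al) g K ltac:(lra) hg ltac:(lra) hK.
exists dl; split => //; exists M => m a b be u hm ham hbm hbe hA hB hu hu1.
rewrite (F_sym _ _ _ ham) (F_sym _ _ _ hbm).
apply: (hM m (m - a)%N (m - b)%N (1 - be) (1 - u)) => //; try lra; try (by rewrite leq_subr).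
- by rewrite natrB // -normrN; apply: le_trans hA; rewrite le_eqVlt; apply/orP; left; apply/eqP; congr (`|_|); ring.
- by rewrite natrB // -normrN; apply: le_trans hB; rewrite le_eqVlt; apply/orP; left; apply/eqP; congr (`|_|); ring.
Qed.


Lemma kidx_bound (n : nat) (x ga C : R) : (1 <= n)%N -> 0 <= x <= 1 ->
  `|x - ga| <= C / n%:R ->
  (kidx n x <= n.-1)%N /\ `|(kidx n x)%:R - (n.-1)%:R * ga| <= `|C| + 1.
Proof.
move=> hn /andP[hx0 hx1] hC.
have hm0 : 0 <= (n.-1)%:R :> R by exact: ler0n.
have hy0 : 0 <= (n.-1)%:R * x by exact: mulr_ge0.
have /andP[k1 k2] := @Num.Theory.truncn_itv R _ hy0.
rewrite /kidx; set k := Num.truncn _ in k1 k2 *.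
have hmn : (n.-1)%:R <= n%:R :> R by rewrite ler_nat leq_pred.
have hn0 : 0 < n%:R :> R by rewrite ltr0n.
split.
  rewrite -(ler_nat R); apply: le_trans k1 _.
  by rewrite -{2}(mulr1 (n.-1)%:R); apply: ler_wpM2l.
have e : k%:R - (n.-1)%:R * ga = (k%:R - (n.-1)%:R * x) + (n.-1)%:R * (x - ga) by ring.
rewrite e; apply: le_trans (ler_normD _ _) _.
have t1 : `|k%:R - (n.-1)%:R * x| <= 1.
  rewrite ler_norml; apply/andP; split; rewrite -?natr1 in k2; lra.
have t2 : `|(n.-1)%:R * (x - ga)| <= `|C|.
  rewrite normrM ger0_norm //.
  have hCn : C / n%:R <= `|C| / n%:R by apply: ler_wpM2r; [rewrite invr_ge0; exact: ltW|exact: ler_norm].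
  have : (n.-1)%:R * `|x - ga| <= (n.-1)%:R * (`|C| / n%:R) by apply: ler_wpM2l => //; exact: le_trans hC hCn.
  move=> h; apply: le_trans h _.
  have hc0 : 0 <= `|C| / n%:R by apply: divr_ge0 => //; exact: ltW.
  apply: le_trans (ler_wpM2r hc0 hmn) _.
  by rewrite mulrC divfK // gt_eqF.
lra.
Qed.

End S.

Lemma phid_F (R : realType) (n : nat) (x t : R) : (1 <= n)%N ->
  phid n x t = n%:R * Fbin R n.-1 (kidx n x) t.
Proof.
move=> hn; rewrite /phid /Fbin.
have -> : (n - kidx n x - 1 = n.-1 - kidx n x)%N by rewrite subnAC subn1.
ring.
Qed.

Lemma combine (R : realType) (T : finType) (P : T -> R -> nat -> Prop) :
  (forall j d N d' N', P j d N -> 0 < d' -> d' <= d -> (N <= N')%N -> P j d' N') ->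
  (forall j, exists d : R, 0 < d /\ exists N : nat, P j d N) ->
  exists d : R, 0 < d /\ exists N : nat, forall j, P j d N.
Proof.
move=> hmono hall.
suff : forall s : seq T, exists d : R, 0 < d /\ exists N : nat, forall j, j \in s -> P j d N.
  case/(_ (enum T)) => d [hd [N hN]]; exists d; split => //; exists N => j.
  by apply: hN; rewrite mem_enum.
elim => [|j s [d2 [hd2 [N2 hN2]]]].
  by exists 1; split => //; exists 0%N.
have [d1 [hd1 [N1 hN1]]] := hall j.
exists (Num.min d1 d2); split; first by rewrite lt_min hd1.
exists (maxn N1 N2) => k; rewrite inE => /orP[/eqP->|hk].
  by apply: hmono hN1 _ _ _ => //; [rewrite lt_min hd1|rewrite ge_min lexx|rewrite leq_maxl].
by apply: hmono (hN2 k hk) _ _ _ => //; [rewrite lt_min hd1|rewrite ge_min lexx orbT|rewrite leq_maxr].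
Qed.


Theorem lemma5p1 (R : realType) (p : nat) (gam : 'I_p -> R)
  (gamn : 'I_p -> nat -> R)
  (hmono : forall i j : 'I_p, (i < j)%N -> gam i < gam j)
  (hg0 : forall i, 0 <= gam i) (hg1 : forall i, gam i <= 1)
  (hrange : forall i n, 0 <= gamn i n <= 1)
  (hO : forall i, exists C : R, exists N0 : nat, forall n : nat, (N0 <= n)%N ->
          `|gamn i n - gam i| <= C / n%:R) :
  forall i : 'I_p, exists delta : R, 0 < delta /\
    exists N : nat, forall u : R,
      gam i - delta < u < gam i + delta -> 0 <= u <= 1 ->
      forall (j : 'I_p) (n : nat), (N <= n)%N ->
        phid n (gamn j n) u <= phid n (gamn i n) u.
Proof.
move=> i.
pose Q := fun (j : 'I_p) (d : R) (N : nat) => forall u : R,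
      gam i - d < u < gam i + d -> 0 <= u <= 1 -> forall n : nat, (N <= n)%N ->
        phid n (gamn j n) u <= phid n (gamn i n) u.
suff [d [hd [N hN]]] : exists d : R, 0 < d /\ exists N : nat, forall j, Q j d N.
  exists d; split => //; exists N => u hu hu01 j n hn; exact: hN.
apply: combine.
  move=> j d N d' N' hQ hd' hdd hNN u hu hu01 n hn.
  apply: hQ => //; last exact: leq_trans hNN hn.
  case/andP: hu => h1 h2; apply/andP; split; lra.
move=> j.
have [Ci [Ni hCi]] := hO i.
have [Cj [Nj hCj]] := hO j.
pose K := `|Ci| + `|Cj| + 1.
have hK : 0 <= K by rewrite /K; apply: addr_ge0 => //; apply: addr_ge0.
have bnd : forall k (C : R) Nk, (forall n, (Nk <= n)%N -> `|gamn k n - gam k| <= C / n%:R) ->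
   `|C| <= `|Ci| + `|Cj| ->
   forall n, (Nk <= n)%N -> (1 <= n)%N ->
   (kidx n (gamn k n) <= n.-1)%N /\ `|(kidx n (gamn k n))%:R - (n.-1)%:R * gam k| <= K.
  move=> k C Nk hC hCK n hn hn1.
  have [h1 h2] := @kidx_bound R n _ _ _ hn1 (hrange k n) (hC n hn).
  split => //; apply: le_trans h2 _; rewrite /K; lra.
have bi := bnd i Ci Ni hCi ltac:(have := normr_ge0 Cj; lra).
have bj := bnd j Cj Nj hCj ltac:(have := normr_ge0 Ci; lra).
case: (ltngtP i j) => hij.
-
  have hlt := hmono _ _ hij.
  have [dl [hdl [_ [M hM]]]] := @core R (gam i) (gam j - gam i) K (hg0 i) ltac:(lra) ltac:(have := hg1 j; lra) hK.
  exists dl; split => //; exists (Ni + Nj + M.+1)%N => u /andP[hu1 hu2] /andP[hu0 hu3] n hn.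
  have hn1 : (1 <= n)%N by clear -hn; lia.
  have [ha1 ha2] := bi n ltac:(clear -hn; lia) hn1.
  have [hb1 hb2] := bj n ltac:(clear -hn; lia) hn1.
  rewrite !phid_F //; apply: ler_wpM2l; first exact: ler0n.
  apply: (hM n.-1 _ _ (gam j) u) => //; try lra.
  by clear -hn; lia.
-
  have hlt := hmono _ _ hij.
  have [dl [hdl [M hM]]] := @core_low R (gam i) (gam i - gam j) K (hg1 i) ltac:(lra) ltac:(have := hg0 j; lra) hK.
  exists dl; split => //; exists (Ni + Nj + M.+1)%N => u /andP[hu1 hu2] /andP[hu0 hu3] n hn.
  have hn1 : (1 <= n)%N by clear -hn; lia.
  have [ha1 ha2] := bi n ltac:(clear -hn; lia) hn1.
  have [hb1 hb2] := bj n ltac:(clear -hn; lia) hn1.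
  rewrite !phid_F //; apply: ler_wpM2l; first exact: ler0n.
  apply: (hM n.-1 _ _ (gam j) u) => //; try lra.
  by clear -hn; lia.
- have -> : j = i by apply: val_inj.
  exists 1; split => //; exists 0%N => u _ _ n _; exact: lexx.
Qed.
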